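(* Let $I\subseteq\mathbb{R}$ be an interval with nonempty interior. There is no mean on $I$ of type $\mathcal{T}_1$. Equivalently, there do not exist continuous functions $F\colon I\to\mathbb{R}$ and $G\colon \omega F(I)\to I$ such that $\mathscr{L}_{F,G}$ is a mean on $I$.
   Context: A mean on an interval $I$ is a function $\mathscr{M}\colon\bigcup_{n=1}^\infty I^n\to I$ with $\min(a)\le\mathscr{M}(a)\le\max(a)$ for every $a\in\bigcup_{n\ge1}I^n$. For a commutative semigroup $(Y,+)$ and $F\colon I\to Y$, let $\omega F(I):=\bigcup_{n=1}^\infty\{F(x_1)+\cdots+F(x_n): x_1,\dots,x_n\in I\}$. For $G\colon\omega F(I)\to I$ define $\mathscr{L}_{F,G}\colon\bigcup_{n\ge1}I^n\to I$ by $\mathscr{L}_{F,G}(a_1,\dots,a_n):=G(F(a_1)+\cdots+F(a_n))$. A mean $\mathscr{M}$ on $I$ is of type $\mathcal{T}_k$ ($k\in\mathbb{N}$) if $\mathscr{M}=\mathscr{L}_{F,G}$ for some continuous $F\colon I\to(\mathbb{R}^k,+)$ and some continuous $G\colon\omega F(I)\to I$ ($\omega F(I)$ carrying the subspace topology). *)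

(* Defs.v *)
From HB Require Import structures.
From mathcomp Require Import all_boot all_order all_algebra.
From mathcomp Require Import all_classical all_reals all_analysis.
Set Implicit Arguments. Unset Strict Implicit. Unset Printing Implicit Defensive.
Import Order.TTheory GRing.Theory Num.Theory.
Import numFieldNormedType.Exports.
Local Open Scope classical_set_scope.
Local Open Scope ring_scope.

(* A "function on \bigcup_{n>=1} I^n" is represented by its family of
   restrictions to tuples of length n.+1 : M n a, for a : 'I_n.+1 -> R. *)
Definition tuple_fun (R : realType) := forall n : nat, ('I_n.+1 -> R) -> R.

Definition in_tuple (R : realType) (I : set R) (n : nat) (a : 'I_n.+1 -> R) :=
  forall i, I (a i).

Definition is_mean (R : realType) (I : set R) (M : tuple_fun R) :=
  forall n (a : 'I_n.+1 -> R), in_tuple I a ->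
    I (M n a) /\
    \big[Order.min/a ord0]_(i < n.+1) a i <= M n a <= \big[Order.max/a ord0]_(i < n.+1) a i.

(* omega F (I) = { F(x_1) + ... + F(x_n) : n >= 1, x_i in I } (here k = 1, Y = R) *)
Definition omegaF (R : realType) (I : set R) (F : R -> R) : set R :=
  [set y | exists n (a : 'I_n.+1 -> R), in_tuple I a /\ y = \sum_(i < n.+1) F (a i)].

Definition LFG (R : realType) (F G : R -> R) : tuple_fun R :=
  fun n a => G (\sum_(i < n.+1) F (a i)).

Definition type_T1 (R : realType) (I : set R) (M : tuple_fun R) :=
  exists F G : R -> R,
    {within I, continuous F} /\
    {within omegaF I F, continuous G} /\
    (forall y, omegaF I F y -> I (G y)) /\
    (forall n (a : 'I_n.+1 -> R), in_tuple I a -> M n a = LFG F G a).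

(* Main.v *)
Require Import Defs.
From HB Require Import structures.
From mathcomp Require Import all_boot all_order all_algebra.
From mathcomp Require Import all_classical all_reals all_analysis.
From mathcomp Require Import lra.
Local Open Scope classical_set_scope.
Local Open Scope ring_scope.
Import numFieldNormedType.Exports.
Import Order.TTheory GRing.Theory Num.Theory.

Lemma iter_idem (R : realType) (op : R -> R -> R) (x : R) n :
  op x x = x -> iter n (op x) x = x.
Proof. by move=> h; elim: n => //= n ->. Qed.

Lemma key_diag (R : realType) (I : set R) (M : tuple_fun R) (F G : R -> R) :
  is_mean I M -> (forall n (a : 'I_n.+1 -> R), Defs.in_tuple I a -> M n a = LFG F G a) ->
  forall x n, I x -> G (F x *+ n.+1) = x.
Proof.
move=> hm hL x n Ix.
have ia : Defs.in_tuple I (fun _ : 'I_n.+1 => x) by [].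
have [_ /andP[h1 h2]] := hm n _ ia.
rewrite hL // /LFG sumr_const card_ord in h1 h2.
move: h1 h2; rewrite !big_const_ord !iter_idem ?minxx ?maxxx // => h1 h2.
by apply/eqP; rewrite eq_le h1 h2.
Qed.

Lemma arith (R : realType) (c d : R) :
  (0 < c < d) \/ (d < c < 0) ->
  exists n : nat, let t := c * n.+2%:R / n.+1%:R in
    (c < t < d) \/ (d < t < c).
Proof.
move=> H.
have hcd : 0 < `|c| / `|d - c|.
  case: H => /andP[h1 h2]; apply: divr_gt0; rewrite normr_gt0; lra.
have := archi_boundP (ltW hcd).
set N := Num.Def.archi_bound _ => hN.
exists N.
have hN1 : (0 : R) < N.+1%:R by rewrite ltr0n.
have e : c * N.+2%:R / N.+1%:R = c + c / N.+1%:R.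
  by rewrite -[N.+2]addn1 natrD mulrDr mulr1 mulrDl mulfK ?gt_eqF.
rewrite /= e.
have hdc : 0 < `|d - c| by rewrite normr_gt0; case: H => /andP[]; lra.
have hlt : `|c| / N.+1%:R < `|d - c|.
  rewrite ltr_pdivrMr // mulrC -ltr_pdivrMr //.
  apply: (lt_trans hN); rewrite ltr_nat; by [].
rewrite -/N in hlt *. move: hlt; set q := c / N.+1%:R => hlt.
case: H => /andP[h1 h2]; [left|right].
- have hc : 0 < q by apply: divr_gt0.
  have e1 : `|c| = c by rewrite gtr0_norm.
  have e2 : `|d - c| = d - c by rewrite gtr0_norm // subr_gt0.
  move: hlt; rewrite e1 e2 -/q => ?; apply/andP; split; lra.
- have hc : q < 0 by rewrite /q ltr_pdivrMr // mul0r.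
  have e1 : `|c| = - c by rewrite ltr0_norm.
  have e2 : `|d - c| = c - d by rewrite ltr0_norm ?opprB // subr_lt0.
  move: hlt; rewrite e1 e2 mulNr -/q => ?; apply/andP; split; lra.
Qed.

Theorem proposition3p1 (R : realType) (I : set R) :
  is_interval I -> interior I !=set0 ->
  ~ exists M : tuple_fun R, is_mean I M /\ type_T1 I M.
Proof.
move=> hI [z /nbhs_ballP [e e0 hb]] [M [hm [F [G [cF [_ [_ hL]]]]]]].
have kd := @key_diag _ _ _ _ _ hm hL.
have inj : forall x y n m, I x -> I y -> F x *+ n.+1 = F y *+ m.+1 -> x = y.
  by move=> x y n m Ix Iy h; rewrite -(kd x n Ix) h kd.
set a := z; set b := z + e / 2.
have Ia : I a by apply: hb; apply: ballxx.
have Ib : I b.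
  apply: hb; rewrite -ball_normE /ball_ /= /b opprD addrA subrr add0r normrN.
  by rewrite gtr0_norm ?divr_gt0 // ltr_pdivrMr // ltr_pMr //; lra.
have ab : a < b by rewrite /b ltrDl divr_gt0.
have sub : `[a, b] `<=` I.
  move=> t; rewrite /= in_itv /= => /andP[h1 h2]; apply: (hI a b) => //.
  by rewrite h1 h2.
have cFab : {within `[a, b], continuous F} := continuous_subspaceW sub cF.
have ivt : forall v, Num.min (F a) (F b) <= v <= Num.max (F a) (F b) ->
    exists2 c, I c & F c = v.
  move=> v hv; have [c hc hFc] := IVT (ltW ab) cFab hv.
  by exists c => //; apply: sub.
have [eF|neF] := eqVneq (F a) (F b).
  have := inj a b 0 0 Ia Ib; rewrite eF => /(_ erefl) h; move: ab; rewrite h; lra.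
set lo := Num.min (F a) (F b); set hi := Num.max (F a) (F b).
have lohi : lo < hi.
  rewrite /lo /hi; case: (leP (F a) (F b)) => h.
  - by rewrite lt_neqAle neF h.
  - by [].
have [c [d [Hcd [hc hd]]]] : exists c d : R, ((0 < c < d) \/ (d < c < 0)) /\
    (lo <= c <= hi) /\ (lo <= d <= hi).
  case: (ltP 0 hi) => h0.
  - exists (Num.max lo (hi / 2)), hi; split; last split.
    + left; apply/andP; split; first by rewrite lt_max; apply/orP; right; lra.
      by rewrite gt_max lohi /=; lra.
    + apply/andP; split; first by rewrite le_max lexx.
      by rewrite ge_max (ltW lohi) /=; lra.
    + by rewrite (ltW lohi) lexx.
  - exists (Num.min hi (lo / 2)), lo; split; last split.
    + right; apply/andP; split; first by rewrite lt_min lohi /=; lra.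
      by rewrite gt_min; apply/orP; right; lra.
    + apply/andP; split; last by rewrite ge_min lexx.
      by rewrite le_min (ltW lohi) /=; lra.
    + by rewrite (ltW lohi) lexx.
have [n /= ht] := @arith _ _ _ Hcd.
set t := c * n.+2%:R / n.+1%:R in ht.
have [y Iy Fy] := ivt c hc.
have htI : lo <= t <= hi.
  move: hc hd => /andP[hc1 hc2] /andP[hd1 hd2].
  by case: ht => /andP[h1 h2]; apply/andP; split; lra.
have [x Ix Fx] := ivt t htI.
have hn : (n.+1%:R : R) != 0 by rewrite gt_eqF // ltr0n.
have eq1 : F x *+ n.+1 = F y *+ n.+2.
  by rewrite Fx Fy -mulr_natr -[c *+ _]mulr_natr /t -mulrA mulVf // mulr1.
have := inj x y n n.+1 Ix Iy eq1 => exy.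
move: Fx; rewrite exy Fy => ct; move: ht; rewrite -ct ltxx.
by case => /andP[].
Qed.
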